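(* Let $t\ge 3$ and let $\mathcal{H}$ be an $n$-vertex $3$-uniform hypergraph that does not contain $K_{2,t}$ as a trace. Let $A$ be the set of edges of $\mathcal{H}$ containing at least one pair of vertices whose co-degree in $\mathcal{H}$ is $1$, and let $B=\mathcal{H}\setminus A$. For a vertex $x$, let $N_1(x)=\{z: \exists e\in B,\ \{x,z\}\subseteq e\}$ and $N_2(x)=\{z\notin N_1(x)\cup\{x\}: \exists e\in B,\ z\in e,\ e\cap N_1(x)\neq\emptyset\}$. Fix a vertex $v$, and for $u\in N_1(v)$ let $E_u=\{e\in B: e\cap N_1(v)=\{u\}\}$ and $V_u=\{w\in N_2(v): \exists e\in E_u,\ w\in e\}$. Then $$\sum_{u\in N_1(v)}|V_u|\le (t-1)(6t-2)\,n.$$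
   Context: A hypergraph $\mathcal{H}$ contains a graph $F$ (vertices $v_1,\dots,v_p$, edges $e_1,\dots,e_q$) as a trace if there exist distinct vertices $w_1,\dots,w_p\in V(\mathcal{H})$ and distinct edges $f_1,\dots,f_q\in E(\mathcal{H})$ such that whenever $e_i=v_\alpha v_\beta$, $f_i\cap\{w_1,\dots,w_p\}=\{w_\alpha,w_\beta\}$. The co-degree of a pair $\{x,y\}$ in $\mathcal{H}$ is the number of edges of $\mathcal{H}$ containing $\{x,y\}$. $\mathcal{H}\setminus A$ denotes the hypergraph on $V(\mathcal{H})$ with edge set $E(\mathcal{H})\setminus A$. *)

(* Defs.v *)
From mathcomp Require Import all_boot.
Set Implicit Arguments. Unset Strict Implicit. Unset Printing Implicit Defensive.

Definition uniform3 (T : finType) (H : {set {set T}}) : Prop :=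
  forall e, e \in H -> #|e| = 3.

Definition contains_trace (VF T : finType) (EF : {set {set VF}})
    (H : {set {set T}}) : Prop :=
  exists (w : VF -> T) (f : {set VF} -> {set T}),
    injective w /\ {in EF &, injective f} /\
    forall e, e \in EF -> f e \in H /\ f e :&: (w @: [set: VF]) = w @: e.

Definition K2t_edges (t : nat) : {set {set ('I_2 + 'I_t)%type}} :=
  [set [set inl i; inr j] | i : 'I_2, j : 'I_t].

Definition contains_K2t_trace (T : finType) (t : nat) (H : {set {set T}}) :=
  contains_trace (K2t_edges t) H.

Section Nbhd.
Variables (T : finType) (H : {set {set T}}).

Definition codeg (x y : T) : nat := #|[set e in H | (x \in e) && (y \in e)]|.

Definition edgesA : {set {set T}} :=
  [set e in H | [exists x in e, exists y in e, (x != y) && (codeg x y == 1)]].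

Definition edgesB : {set {set T}} := H :\: edgesA.

Definition N1 (x : T) : {set T} :=
  [set z | (z != x) && [exists e in edgesB, (x \in e) && (z \in e)]].

Definition N2 (x : T) : {set T} :=
  [set z | (z \notin N1 x) && (z != x) &&
           [exists e in edgesB, (z \in e) && (e :&: N1 x != set0)]].

Definition E_u (v u : T) : {set {set T}} :=
  [set e in edgesB | e :&: N1 v == [set u]].

Definition V_u (v u : T) : {set T} :=
  [set w in N2 v | [exists e in E_u v u, w \in e]].
End Nbhd.

(* Main.v *)
Require Import Defs.
From mathcomp Require Import all_boot zify.
Set Implicit Arguments. Unset Strict Implicit. Unset Printing Implicit Defensive.

Lemma sum_pre (T : finType) (f : T -> T) (U : {set T}) :
  \sum_(u in U) #|[set x in U | f x == u]| <= #|U|.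
Proof.
have -> : \sum_(u in U) #|[set x in U | f x == u]| =
          \sum_(u in U) \sum_(x in U) (f x == u).
  apply: eq_bigr => u _; rewrite -sum1_card big_mkcond /= [RHS]big_mkcond /=.
  apply: eq_bigr => x _; rewrite inE; by case: (x \in U); case: (f x == u).
rewrite exchange_big /= -sum1_card; apply: leq_sum => x _.
case fU: (f x \in U).
  rewrite (bigD1 (f x)) //= eqxx big1 // => i /andP[_ H].
  by rewrite eq_sym (negbTE H).
rewrite big1 // => i iU; case: eqP => // E; by rewrite E iU in fU.
Qed.

Lemma fg (T : finType) (f : T -> T) (n : nat) : forall (U : {set T}), #|U| <= n ->
  {in U, forall u, f u != u} ->
  exists2 S : {set T}, S \subset U & (#|U| <= 3 * #|S|) /\ {in S &, forall x y, f x != y}.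
Proof.
elim: n => [|n IH] U HU Hf.
  exists set0; first exact: sub0set.
  split; first by move: HU; rewrite leqn0 => /eqP ->.
  by move=> x y; rewrite inE.
case: (set_0Vmem U) => [->|[u0 u0U]].
  exists set0; first exact: sub0set.
  by split; [rewrite cards0 | move=> x y; rewrite inE].
have [u Hu Hpre] : exists2 u, u \in U & #|[set x in U | f x == u]| <= 1.
  case: (boolP [exists x in U, #|[set y in U | f y == x]| <= 1]) => [/exists_inP //|].
  rewrite negb_exists_in => /forall_inP Hall; exfalso.
  have := sum_pre f U.
  have : \sum_(u in U) 2 <= \sum_(u in U) #|[set x in U | f x == u]|.
    by apply: leq_sum => i /Hall; rewrite -ltnNge.
  rewrite sum_nat_const => H1 H2.
  have := leq_trans H1 H2.
  have : 0 < #|U| by apply/card_gt0P; exists u0.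
  lia.
set P := [set x in U | f x == u].
set R := [set u; f u] :|: P.
set U' := U :\: R.
have uR : u \in R by rewrite !inE eqxx.
have HU' : #|U'| <= n.
  have : #|U'| < #|U|.
    apply: proper_card; apply/properP; split; first exact: subsetDl.
    by exists u => //; rewrite in_setD uR.
  lia.
have [S' S'U' [HS'1 HS'2]] := IH U' HU' (fun x xU => Hf x (subsetP (subsetDl U R) x xU)).
have uS' : u \notin S'.
  apply/negP => /(subsetP S'U'); by rewrite in_setD uR.
exists (u |: S').
  apply/subsetP => x; rewrite in_setU1 => /orP[/eqP -> //|/(subsetP S'U')].
  by rewrite in_setD => /andP[].
split.
  rewrite cardsU1 uS' /=.
  have HR : #|R| <= 3.
    apply: leq_trans (leq_card_setU _ _) _.
    rewrite cards2; move: Hpre; rewrite -/P; case: (u != f u) => /=; lia.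
  have := cardsID R U. rewrite -/U'.
  have : #|U :&: R| <= #|R| by apply: subset_leq_card; apply: subsetIr.
  lia.
move=> x y; rewrite !inE => /orP[/eqP ->|xS] /orP[/eqP ->|yS].
- exact: Hf.
- apply/negP => /eqP E; move: (subsetP S'U' y yS); rewrite -E in_setD !inE eqxx.
  by rewrite orbT.
- have := subsetP S'U' x xS; rewrite !inE => /andP[H xU].
  apply/negP => E; move: H; by rewrite xU E !orbT.
- exact: HS'2.
Qed.

Lemma three (T : finType) (e : {set T}) a b : #|e| = 3 -> a \in e -> b \in e -> a != b ->
  exists c, [/\ c != a, c != b & forall y, (y \in e) = [|| y == a, y == b | y == c]].
Proof.
move=> He ae be ab.
have : #|e :\: [set a; b]| == 1.
  rewrite cardsD (setIidPr _); last first.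
    by apply/subsetP => x; rewrite !inE => /orP[] /eqP ->.
  by rewrite He cards2 ab.
case/cards1P => c Hc.
have : c \in e :\: [set a; b] by rewrite Hc inE.
rewrite !inE negb_or => /andP[/andP[ca cb] ce].
exists c; split => // y.
case: (eqVneq y a) => [->|ya]; first by rewrite ae.
case: (eqVneq y b) => [->|yb]; first by rewrite be orbT.
rewrite /=.
have : (y \in e :\: [set a; b]) = (y \in e) by rewrite !inE negb_or ya yb.
by rewrite Hc inE => <-.
Qed.

Lemma key (T : finType) (t : nat) (H : {set {set T}}) (v w0 : T) :
  uniform3 H -> ~ contains_K2t_trace t H ->
  #|[set u in N1 H v | w0 \in V_u H v u]| <= 3 * (t - 1).
Proof.
move=> H3 HK.
set U := [set u in N1 H v | w0 \in V_u H v u].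
rewrite leqNgt; apply/negP => HU.
have [u0 u0U] : exists u0, u0 \in U.
  by apply/card_gt0P; apply: leq_ltn_trans HU.
have w0N2 : w0 \in N2 H v.
  by move: u0U; rewrite !inE => /andP[_ /andP[]].
have [w0N1 w0v] : w0 \notin N1 H v /\ w0 != v.
  by move: w0N2; rewrite inE => /andP[/andP[]].
have vN1 : v \notin N1 H v by rewrite inE eqxx.
have UN1 : forall u, u \in U -> u \in N1 H v by move=> u; rewrite inE => /andP[].
have Fex : forall u, u \in U ->
    exists F, [&& F \in H, v \in F, u \in F & w0 \notin F].
  move=> u /UN1 uN1.
  have w0u : w0 != u by apply: contraNneq w0N1 => ->.
  move: uN1; rewrite inE => /andP[uv /exists_inP[e eB /andP[ve ue]]].
  move: eB; rewrite inE => /andP[eA eH].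
  have cd1 : codeg H v u != 1.
    apply: contra eA => c1; rewrite inE eH /=.
    apply/exists_inP; exists v => //; apply/exists_inP; exists u => //.
    by rewrite eq_sym uv.
  have : 1 < codeg H v u.
    have : 0 < codeg H v u by apply/card_gt0P; exists e; rewrite inE eH ve ue.
    by move: cd1; case: (codeg H v u) => [|[|]].
  case/card_gt1P => e1 [e2 [e1i e2i e12]].
  move: e1i e2i; rewrite !inE => /andP[e1H /andP[ve1 ue1]] /andP[e2H /andP[ve2 ue2]].
  case w1: (w0 \in e1); last by exists e1; rewrite e1H ve1 ue1 w1.
  case w2: (w0 \in e2); last by exists e2; rewrite e2H ve2 ue2 w2.
  exfalso; move/negP: e12; apply; apply/eqP/setP => y.
  have vu : v != u by rewrite eq_sym.
  have [c1 [c1v c1u Hc1]] := three (H3 _ e1H) ve1 ue1 vu.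
  have [c2 [c2v c2u Hc2]] := three (H3 _ e2H) ve2 ue2 vu.
  move: w1 w2; rewrite !Hc1 !Hc2 (negbTE w0v) (negbTE w0u) /= => /eqP <- /eqP <-.
  by [].
pose Fu u := odflt set0 [pick F | [&& F \in H, v \in F, u \in F & w0 \notin F]].
have FuP : forall u, u \in U -> [&& Fu u \in H, v \in Fu u, u \in Fu u & w0 \notin Fu u].
  move=> u uU; rewrite /Fu; case: pickP => [F //|].
  by have [F HF] := Fex u uU => /(_ F); rewrite HF.
pose p u := odflt u [pick y | [&& y \in Fu u, y != v & y != u]].
have pP : forall u, u \in U -> [/\ p u != u, p u != v &
     forall y, (y \in Fu u) = [|| y == v, y == u | y == p u]].
  move=> u uU; have /and4P[FH vF uF wF] := FuP u uU.
  have uv : v != u by apply/eqP => E; move: (UN1 u uU); rewrite -E (negbTE vN1).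
  have [c [cv cu Hc]] := three (H3 _ FH) vF uF uv.
  have pc : p u = c.
    rewrite /p; case: pickP => [y /and3P[yF yv yu]|].
      by move: yF; rewrite Hc (negbTE yv) (negbTE yu) /= => /eqP.
    by move/(_ c); rewrite Hc eqxx cv cu !orbT.
  by rewrite pc; split.
pose eu u := odflt set0 [pick e | (e \in E_u H v u) && (w0 \in e)].
have euP : forall u, u \in U -> [/\ eu u \in edgesB H, eu u :&: N1 H v = [set u],
       w0 \in eu u & v \notin eu u].
  move=> u uU.
  have : (eu u \in E_u H v u) && (w0 \in eu u).
    rewrite /eu; case: pickP => [e //|].
    move: uU; rewrite !inE => /andP[_ /andP[_ /exists_inP[e eE we]]].
    by move/(_ e); rewrite eE we.
  rewrite inE => /andP[/andP[eB /eqP eN] we]; split => //.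
  apply/negP => ve; move/negP: w0N1; apply.
  by rewrite inE w0v /=; apply/exists_inP; exists (eu u) => //; rewrite ve we.
have [S SU [HS1 HS2]] := fg (n := #|U|) (f := p) (leqnn _) (fun u uU => let: And3 a _ _ := pP u uU in a).
have Hts : t <= #|S| by lia.
pose g (j : 'I_t) : T := enum_val (widen_ord Hts j).
have gS : forall j, g j \in S by move=> j; exact: enum_valP.
have gU : forall j, g j \in U by move=> j; exact: (subsetP SU).
have ginj : injective g.
  by move=> j k /enum_val_inj /(congr1 val) /= /val_inj.
have gN1 : forall j, g j \in N1 H v by move=> j; exact: UN1.
pose wm (x : ('I_2 + 'I_t)%type) : T :=
  match x with inl i => if i == ord0 then v else w0 | inr j => g j end.
pose fm (E : {set ('I_2 + 'I_t)%type}) : {set T} :=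
  match [pick k | inr k \in E] with
  | Some k => if inl ord0 \in E then Fu (g k) else eu (g k)
  | None => set0 end.
have wminj : injective wm.
  have gv : forall j, g j != v by move=> j; apply/eqP => E; move: (gN1 j); rewrite E (negbTE vN1).
  have gw : forall j, g j != w0 by move=> j; apply/eqP => E; move: (gN1 j); rewrite E (negbTE w0N1).
  case=> [i1|j1] [i2|j2] /=.
  - case: (eqVneq i1 ord0) => [->|i10]; case: (eqVneq i2 ord0) => [->|i20] //.
    + by move/eqP; rewrite eq_sym (negbTE w0v).
    + by move/eqP; rewrite (negbTE w0v).
    + move=> _; congr inl; apply: val_inj.
      move: i10 i20; rewrite -!(inj_eq val_inj) /=.
      have := ltn_ord i1; have := ltn_ord i2; lia.
  - by case: (i1 == ord0) => /eqP; rewrite eq_sym ?(negbTE (gv _)) ?(negbTE (gw _)).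
  - by case: (i2 == ord0) => /eqP; rewrite ?(negbTE (gv _)) ?(negbTE (gw _)).
  - by move/ginj ->.
have fmE : forall i j, fm [set inl i; inr j] = if i == ord0 then Fu (g j) else eu (g j).
  move=> i j; rewrite /fm; case: pickP => [k|].
    rewrite !inE /= => /eqP [->].
    have -> : (inl ord0 == inl i :> ('I_2 + 'I_t)%type) = (i == ord0).
      by apply/eqP/eqP => [[->]|->].
    have -> : (inl ord0 == inr j :> ('I_2 + 'I_t)%type) = false by [].
    by rewrite orbF.
  by move/(_ j); rewrite !inE eqxx orbT.
have keyE : forall i j, fm [set inl i; inr j] \in H /\
    fm [set inl i; inr j] :&: [set wm x | x in [set: ('I_2 + 'I_t)%type]] =
    [set wm x | x in [set inl i; inr j]].
  move=> i j; rewrite fmE.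
  have [pgu pgv pF] := pP _ (gU j).
  have /and4P[FH vF uF wF] := FuP _ (gU j).
  have [eB eN we ve] := euP _ (gU j).
  split; first by case: (i == ord0) => //; move: eB; rewrite inE => /andP[].
  apply/setP => y; rewrite imsetU1 imset_set1 !inE /=.
  case Hi: (i == ord0).
  - apply/andP/idP.
    + case=> yF /imsetP[x _ Ey]; move: yF; rewrite Ey; clear Ey.
      case: x => [i'|k] /=.
        by case: (i' == ord0); rewrite ?eqxx // (negbTE wF).
      rewrite pF => /or3P[/eqP gkv|/eqP ->|/eqP gkp]; rewrite ?eqxx ?orbT //.
        by move: (gN1 k); rewrite gkv (negbTE vN1).
      by move: (HS2 _ _ (gS j) (gS k)); rewrite gkp eqxx.
    + case/orP => /eqP ->; split => //.
        by apply/imsetP; exists (inl i); rewrite ?inE //= Hi.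
      exact: (imset_f wm (in_setT (inr j))).
  - apply/andP/idP.
    + case=> ye /imsetP[x _ Ey]; move: ye; rewrite Ey; clear Ey.
      case: x => [i'|k] /=.
        by case: (i' == ord0) => ye; rewrite ?eqxx //; rewrite ye in ve.
      move=> gke; have : g k \in eu (g j) :&: N1 H v by rewrite inE gke gN1.
      by rewrite eN inE => ->; rewrite orbT.
    + have : g j \in eu (g j) :&: N1 H v by rewrite eN inE.
      rewrite inE => /andP[gje _].
      case/orP => /eqP ->; split => //.
        by apply/imsetP; exists (inl i); rewrite ?inE //= Hi.
      exact: (imset_f wm (in_setT (inr j))).
apply: HK; exists wm, fm; split => //; split.
  move=> E1 E2 /imset2P[i1 j1 _ _ ->] /imset2P[i2 j2 _ _ ->] Heq.
  have [_ K1] := keyE i1 j1; have [_ K2] := keyE i2 j2.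
  apply: (imset_inj wminj); by rewrite -K1 -K2 Heq.
by move=> E /imset2P[i j _ _ ->]; exact: keyE.
Qed.

Theorem mainTheorem8 (T : finType) (t : nat) (H : {set {set T}}) (v : T) :
  3 <= t ->
  uniform3 H ->
  ~ contains_K2t_trace t H ->
  \sum_(u in N1 H v) #|V_u H v u| <= (t - 1) * (6 * t - 2) * #|T|.
Proof.
move=> t3 H3 HK.
have -> : \sum_(u in N1 H v) #|V_u H v u| =
          \sum_(u in N1 H v) \sum_(w : T) (w \in V_u H v u).
  apply: eq_bigr => u _; rewrite -sum1_card big_mkcond /=.
  by apply: eq_bigr => x _; case: (x \in V_u H v u).
rewrite exchange_big /=.
have -> : \sum_(w : T) \sum_(u in N1 H v) (w \in V_u H v u) =
          \sum_(w : T) #|[set u in N1 H v | w \in V_u H v u]|.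
  apply: eq_bigr => w _; rewrite -sum1_card [RHS]big_mkcond /= [LHS]big_mkcond /=.
  apply: eq_bigr => u _; rewrite inE; by case: (u \in N1 H v); case: (w \in V_u H v u).
apply: (@leq_trans (\sum_(w : T) 3 * (t - 1))).
  by apply: leq_sum => w _; apply: key.
rewrite sum_nat_const.
have : 3 <= 6 * t - 2 by lia.
move: (#|_|) => n h.
rewrite [n * _]mulnC; apply: leq_mul => //; rewrite [3 * _]mulnC; exact: leq_mul.
Qed.
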